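(* Let $n,m\in\mathbb{N}$ be fixed. For all $X,Y\in \mathrm{IS}^{\mathrm{br}}_{n,m}$: $X \approx_{\mathrm{sa}} Y$ only if there exists an $l\in\mathbb{N}$ such that for all $b'_1,\ldots,b'_l\in\{0,1\}$ there exist $b''_1,\ldots,b''_l\in\{0,1\}$ such that for all $b_1,\ldots,b_n\in\{0,1\}$, writing $I=\{\mathrm{in}_i.\mathrm{BR}_{b_i}\mid 1\le i\le n\}$, $A'=\{\mathrm{aux}_i.\mathrm{BR}_{b'_i}\mid 1\le i\le l\}$, $A''=\{\mathrm{aux}_i.\mathrm{BR}_{b''_i}\mid 1\le i\le l\}$ and $O=\{\mathrm{out}_i.\mathrm{BR}_{0}\mid 1\le i\le m\}$: $$\mathrm{apply}(\mathrm{use}(|X|, I\cup A'),\,O)=\mathrm{apply}(\mathrm{use}(|Y|, I\cup A''),\,O)$$ and $$\mathrm{depth}\big(\mathrm{tuse}(\mathrm{tuse}(|X|, I\cup A'),\,O)\big)=\mathrm{depth}\big(\mathrm{tuse}(\mathrm{tuse}(|Y|, I\cup A''),\,O)\big).$$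
   Context: Foci (register names) are $\mathrm{in}_i,\mathrm{aux}_i,\mathrm{out}_i$ for $i\ge1$; methods are $\mathrm{set}{:}0,\mathrm{set}{:}1,\mathrm{get}$. The basic instructions are $\mathrm{BI}_{n,m}=\{f.\mathrm{get}\mid f\in\{\mathrm{in}_1..\mathrm{in}_n\}\cup\{\mathrm{aux}_i\mid i\ge1\}\}\cup\{f.\mathrm{set}{:}b\mid f\in\{\mathrm{aux}_i\mid i\ge1\}\cup\{\mathrm{out}_1..\mathrm{out}_m\},b\in\{0,1\}\}$; $\mathrm{focus}(f.m)=f$. Primitive instructions: for $a\in\mathrm{BI}_{n,m}$ the plain instruction $a$, positive test $+a$, negative test $-a$; forward jumps $\#l$ ($l\in\mathbb{N}$); termination $!$. $\mathrm{IS}^{\mathrm{br}}_{n,m}$ is the set of finite nonempty sequences of primitive instructions, written $u_1;\dots;u_k$. Threads: finite terms built from $\mathsf{S}$ (termination), $\mathsf{D}$ (inaction) and postconditional composition $x\trianglelefteq a\trianglerighteq y$ for basic actions $a$, where basic actions are the $f.m$ and also the trace actions $\langle f.m\rangle r$ ($r\in\{0,1\}$); threads are equal iff syntactically equal; $a\circ x$ abbreviates $x\trianglelefteq a\trianglerighteq x$. $\mathrm{depth}(\mathsf S)=\mathrm{depth}(\mathsf D)=0$, $\mathrm{depth}(x\trianglelefteq a\trianglerighteq y)=\max(\mathrm{depth}(x),\mathrm{depth}(y))+1$. Thread extraction $|\cdot|$ ($u$ primitive, $X$ a nonempty sequence): $|a|=a\circ\mathsf D$, $|a;X|=a\circ|X|$,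 $|{+a}|=|{-a}|=a\circ\mathsf D$, $|{+a};X|=|X|\trianglelefteq a\trianglerighteq|\#2;X|$, $|{-a};X|=|\#2;X|\trianglelefteq a\trianglerighteq|X|$, $|\#l|=\mathsf D$, $|\#0;X|=\mathsf D$, $|\#1;X|=|X|$, $|\#(l+2);u|=\mathsf D$, $|\#(l+2);u;X|=|\#(l+1);X|$, $|!|=|!;X|=\mathsf S$. (Execution: tests run $a$ and skip the next instruction if the reply is $0$ for $+a$, $1$ for $-a$.) A register family $F$ is a finite set of pairs $f.\mathrm{BR}_b$ ($b\in\{0,1\}$, Boolean register named $f$ with content $b$) with pairwise distinct foci; $\emptyset$ is the empty family. Processing method $m$ on $\mathrm{BR}_b$: $\mathrm{set}{:}c$ gives reply $c$ and new content $c$; $\mathrm{get}$ gives reply $b$ and leaves content $b$. If $f.\mathrm{BR}_b\in F$ and $m$ yields reply $r$ and new content $b'$, let $F'$ be $F$ with $f.\mathrm{BR}_b$ replaced by $f.\mathrm{BR}_{b'}$. Abstracting use: $\mathrm{use}(\mathsf S,F)=\mathsf S$, $\mathrm{use}(\mathsf D,F)=\mathsf D$; if $f$ is not a focus in $F$, $\mathrm{use}(x\trianglelefteq f.m\trianglerighteq y,F)=\mathrm{use}(x,F)\trianglelefteq f.m\trianglerighteq\mathrm{use}(y,F)$; otherwise it equals $\mathrm{use}(x,F')$ if $r=1$ and $\mathrm{use}(y,F')$ if $r=0$; $\mathrm{use}(x\trianglelefteq\langle f.m\rangle r\trianglerighteq y,F)=\langle f.m\rangle r\circ\mathrm{use}(x,F)$.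 Apply (result is a register family): $\mathrm{apply}(\mathsf S,F)=F$, $\mathrm{apply}(\mathsf D,F)=\emptyset$; if $f$ not a focus in $F$, $\mathrm{apply}(x\trianglelefteq f.m\trianglerighteq y,F)=\emptyset$; otherwise it equals $\mathrm{apply}(x,F')$ if $r=1$, $\mathrm{apply}(y,F')$ if $r=0$; $\mathrm{apply}(x\trianglelefteq\langle f.m\rangle r\trianglerighteq y,F)=\mathrm{apply}(x,F)$. Tracking use: $\mathrm{tuse}(\mathsf S,F)=\mathsf S$, $\mathrm{tuse}(\mathsf D,F)=\mathsf D$; if $f$ not a focus in $F$, $\mathrm{tuse}(x\trianglelefteq f.m\trianglerighteq y,F)=\mathrm{tuse}(x,F)\trianglelefteq f.m\trianglerighteq\mathrm{tuse}(y,F)$; otherwise it equals $\langle f.m\rangle 1\circ\mathrm{tuse}(x,F')$ if $r=1$ and $\langle f.m\rangle 0\circ\mathrm{tuse}(y,F')$ if $r=0$; $\mathrm{tuse}(x\trianglelefteq\langle f.m\rangle r\trianglerighteq y,F)=\langle f.m\rangle r\circ\mathrm{tuse}(x,F)$. Equivalences on $\mathrm{IS}^{\mathrm{br}}_{n,m}$: (i) $X\approx_{\mathrm b}Y$ iff $|X|=|Y|$. (ii) $X\approx_{\mathrm x}Y$ iff $Y=\chi_I(X)$ for some finite $I\subset\mathbb{N}_{>0}$, where $\chi_I$ acts instruction-wise: for $f=\mathrm{aux}_i$ with $i\in I$, $f.m\mapsto f.\chi''(m)$, $+f.m\mapsto -f.\chi''(m)$, $-f.m\mapsto +f.\chi''(m)$,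 with $\chi''$ swapping $\mathrm{set}{:}0$ and $\mathrm{set}{:}1$ and fixing $\mathrm{get}$; all other instructions unchanged. (iii) $X\approx_{\mathrm r}Y$ iff $Y=\rho_r(X)$ for some bijection $r$ of $\mathbb{N}_{>0}$, where $\rho_r$ replaces instruction-wise every focus $\mathrm{aux}_i$ by $\mathrm{aux}_{r(i)}$ (in plain, positive and negative test instructions) and leaves everything else unchanged. (iv) $X\approx_{\mathrm t}Y$ iff $|X|\approx'_{\mathrm t}|Y|$, where $\approx'_{\mathrm t}$ is the smallest relation on finite threads over $\mathrm{BI}_{n,m}$ such that: if $\mathrm{focus}(a)\ne\mathrm{focus}(b)$ then $(x\trianglelefteq b\trianglerighteq y)\trianglelefteq a\trianglerighteq(x'\trianglelefteq b\trianglerighteq y')\approx'_{\mathrm t}(x\trianglelefteq a\trianglerighteq x')\trianglelefteq b\trianglerighteq(y\trianglelefteq a\trianglerighteq y')$; it is reflexive and transitive; and $x\approx'_{\mathrm t}x'$, $y\approx'_{\mathrm t}y'$ imply $x\trianglelefteq a\trianglerighteq y\approx'_{\mathrm t}x'\trianglelefteq a\trianglerighteq y'$. The structural algorithmic equivalence $\approx_{\mathrm{sa}}$ is the smallest relation containing $\approx_{\mathrm b},\approx_{\mathrm x},\approx_{\mathrm r},\approx_{\mathrm t}$ and closed under transitivity. *)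

(* Defs.v *)
From Stdlib Require Import Arith List Bool.
Import ListNotations.

(* Register indices are natural numbers; only indices >= 1 are meaningful
   (in_i, aux_i, out_i for i >= 1), enforced by [basic_ok] below. *)
Inductive focus : Type :=
| In  (i : nat)
| Aux (i : nat)
| Out (i : nat).

Definition focus_eq_dec (f g : focus) : {f = g} + {f <> g}.
Proof. decide equality; apply Nat.eq_dec. Defined.

(* set:b (b = false is set:0, b = true is set:1) and get *)
Inductive method : Type :=
| MSet (b : bool)
| MGet.

Definition basic_ok (n m : nat) (f : focus) (meth : method) : Prop :=
  match f, meth with
  | In i,  MGet    => 1 <= i <= n
  | In _,  MSet _  => False
  | Aux i, _       => 1 <= i
  | Out i, MSet _  => 1 <= i <= m
  | Out _, MGet    => False
  end.

Inductive instr : Type :=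
| Plain (f : focus) (meth : method)
| PTest (f : focus) (meth : method)
| NTest (f : focus) (meth : method)
| Jump  (l : nat)
| Term.

Definition instr_ok (n m : nat) (u : instr) : Prop :=
  match u with
  | Plain f meth | PTest f meth | NTest f meth => basic_ok n m f meth
  | Jump _ | Term => True
  end.

Definition IS (n m : nat) (X : list instr) : Prop :=
  X <> [] /\ Forall (instr_ok n m) X.

Inductive action : Type :=
| Act   (f : focus) (meth : method)
| Trace (f : focus) (meth : method) (r : bool).

Inductive thread : Type :=
| TS                                       (* S : termination *)
| TD                                       (* D : inaction    *)
| Pc (x : thread) (a : action) (y : thread).

Definition pre (a : action) (x : thread) : thread := Pc x a x.

Fixpoint depth (x : thread) : nat :=
  match x with
  | TS | TD => 0
  | Pc x _ y => Nat.max (depth x) (depth y) + 1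
  end.

(* [ext X] = |X| for nonempty X ([ext []] is an unused default).
   The local function [jmp l Y] computes |#l;Y| following the equations
   |#0;Y| = D, |#1;Y| = |Y|, |#(l+2);u| = D, |#(l+2);u;Y| = |#(l+1);Y|,
   and |#l| = D (case Y = []). *)
Fixpoint ext (X : list instr) : thread :=
  match X with
  | [] => TD
  | u :: X' =>
    let fix jmp (l : nat) (Y : list instr) {struct Y} : thread :=
      match Y with
      | [] => TD
      | v :: Y' =>
        match l with
        | 0 => TD
        | 1 => ext Y
        | S (S l') => jmp (S l') Y'
        end
      end in
    match u with
    | Plain f meth =>
        match X' with [] => pre (Act f meth) TD | _ => pre (Act f meth) (ext X') end
    | PTest f meth =>
        match X' with [] => pre (Act f meth) TD
                    | _ => Pc (ext X') (Act f meth) (jmp 2 X') end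
    | NTest f meth =>
        match X' with [] => pre (Act f meth) TD
                    | _ => Pc (jmp 2 X') (Act f meth) (ext X') end
    | Jump l => jmp l X'
    | Term => TS
    end
  end.

(* A register family is represented by the partial map sending a focus f to
   [Some b] iff f.BR_b is in the family (foci are pairwise distinct, so this
   is a faithful representation); the empty family maps everything to None.
   Equality of families is equality of these maps. *)
Definition regfam := focus -> option bool.

Definition empty_fam : regfam := fun _ => None.

Definition upd (F : regfam) (f : focus) (b : bool) : regfam :=
  fun g => if focus_eq_dec g f then Some b else F g.

(* processing a method on BR_b: (reply, new content) *)
Definition proc (meth : method) (b : bool) : bool * bool :=
  match meth with
  | MSet c => (c, c)
  | MGet => (b, b)
  end.

Fixpoint use (x : thread) (F : regfam) : thread :=
  match x with
  | TS => TS
  | TD => TD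
  | Pc x (Act f meth) y =>
      match F f with
      | None => Pc (use x F) (Act f meth) (use y F)
      | Some b =>
          let (r, b') := proc meth b in
          if r then use x (upd F f b') else use y (upd F f b')
      end
  | Pc x (Trace f meth r) _ => pre (Trace f meth r) (use x F)
  end.

Fixpoint apply (x : thread) (F : regfam) : regfam :=
  match x with
  | TS => F
  | TD => empty_fam
  | Pc x (Act f meth) y =>
      match F f with
      | None => empty_fam
      | Some b =>
          let (r, b') := proc meth b in
          if r then apply x (upd F f b') else apply y (upd F f b')
      end
  | Pc x (Trace _ _ _) _ => apply x F
  end.

Fixpoint tuse (x : thread) (F : regfam) : thread :=
  match x with
  | TS => TS
  | TD => TD
  | Pc x (Act f meth) y =>
      match F f with
      | None => Pc (tuse x F) (Act f meth) (tuse y F)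
      | Some b =>
          let (r, b') := proc meth b in
          if r then pre (Trace f meth true) (tuse x (upd F f b'))
          else pre (Trace f meth false) (tuse y (upd F f b'))
      end
  | Pc x (Trace f meth r) _ => pre (Trace f meth r) (tuse x F)
  end.

Definition swap_set (meth : method) : method :=
  match meth with MSet b => MSet (negb b) | MGet => MGet end.

Definition chi_instr (I : list nat) (u : instr) : instr :=
  match u with
  | Plain (Aux i) meth => if in_dec Nat.eq_dec i I then Plain (Aux i) (swap_set meth) else u
  | PTest (Aux i) meth => if in_dec Nat.eq_dec i I then NTest (Aux i) (swap_set meth) else u
  | NTest (Aux i) meth => if in_dec Nat.eq_dec i I then PTest (Aux i) (swap_set meth) else u
  | _ => u
  end.

Definition chi (I : list nat) (X : list instr) : list instr := map (chi_instr I) X.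

Definition rho_focus (r : nat -> nat) (f : focus) : focus :=
  match f with Aux i => Aux (r i) | _ => f end.

Definition rho_instr (r : nat -> nat) (u : instr) : instr :=
  match u with
  | Plain f meth => Plain (rho_focus r f) meth
  | PTest f meth => PTest (rho_focus r f) meth
  | NTest f meth => NTest (rho_focus r f) meth
  | _ => u
  end.

Definition rho (r : nat -> nat) (X : list instr) : list instr := map (rho_instr r) X.

Definition bij_pos (r : nat -> nat) : Prop :=
  (forall i, 0 < i -> 0 < r i) /\
  (forall i j, 0 < i -> 0 < j -> r i = r j -> i = j) /\
  (forall j, 0 < j -> exists i, 0 < i /\ r i = j).

Definition act_focus (a : action) : focus :=
  match a with Act f _ | Trace f _ _ => f end.

Definition act_ok (n m : nat) (a : action) : Prop :=
  match a with Act f meth => basic_ok n m f meth | Trace _ _ _ => False end.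

Inductive teq (n m : nat) : thread -> thread -> Prop :=
| teq_swap (a b : action) (x y x' y' : thread) :
    act_ok n m a -> act_ok n m b -> act_focus a <> act_focus b ->
    teq n m (Pc (Pc x b y) a (Pc x' b y'))
            (Pc (Pc x a x') b (Pc y a y'))
| teq_refl (x : thread) : teq n m x x
| teq_trans (x y z : thread) : teq n m x y -> teq n m y z -> teq n m x z
| teq_cong (a : action) (x x' y y' : thread) :
    act_ok n m a -> teq n m x x' -> teq n m y y' ->
    teq n m (Pc x a y) (Pc x' a y').

Inductive sa_equiv (n m : nat) : list instr -> list instr -> Prop :=
| sa_b (X Y : list instr) :
    IS n m X -> IS n m Y -> ext X = ext Y -> sa_equiv n m X Y
| sa_x (X Y : list instr) (I : list nat) :
    IS n m X -> IS n m Y -> (forall i, List.In i I -> 0 < i) -> Y = chi I X ->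
    sa_equiv n m X Y
| sa_r (X Y : list instr) (r : nat -> nat) :
    IS n m X -> IS n m Y -> bij_pos r -> Y = rho r X -> sa_equiv n m X Y
| sa_t (X Y : list instr) :
    IS n m X -> IS n m Y -> teq n m (ext X) (ext Y) -> sa_equiv n m X Y
| sa_trans (X Y Z : list instr) :
    sa_equiv n m X Y -> sa_equiv n m Y Z -> sa_equiv n m X Z.

Definition fam_IA (n l : nat) (b c : nat -> bool) : regfam :=
  fun f => match f with
  | In i  => if (1 <=? i) && (i <=? n) then Some (b i) else None
  | Aux i => if (1 <=? i) && (i <=? l) then Some (c i) else None
  | Out _ => None
  end.

Definition fam_O (m : nat) : regfam :=
  fun f => match f with
  | Out i => if (1 <=? i) && (i <=? m) then Some false else None
  | _ => None
  end.

(* Main.v *)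
Require Import Defs.
From Stdlib Require Import Arith List Bool Lia FunctionalExtensionality.
Import ListNotations.

Fixpoint jmpg (l : nat) (Y : list instr) : thread :=
  match Y with
  | [] => TD
  | v :: Y' => match l with 0 => TD | 1 => ext Y | S (S l') => jmpg (S l') Y' end
  end.

Lemma jmpg_nil l : jmpg l [] = TD. Proof. reflexivity. Qed.
Lemma jmpg_0 v Y : jmpg 0 (v::Y) = TD. Proof. reflexivity. Qed.
Lemma jmpg_1 v Y : jmpg 1 (v::Y) = ext (v::Y). Proof. reflexivity. Qed.
Lemma jmpg_SS l v Y : jmpg (S (S l)) (v::Y) = jmpg (S l) Y. Proof. reflexivity. Qed.
Lemma ext_nil : ext [] = TD. Proof. reflexivity. Qed.
Lemma ext_jump l X : ext (Jump l :: X) = jmpg l X. Proof. reflexivity. Qed.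
Lemma ext_term X : ext (Term :: X) = TS. Proof. reflexivity. Qed.

Definition is_jt (u : instr) : bool := match u with Jump _ | Term => true | _ => false end.
Definition nilb (X : list instr) : bool := match X with [] => true | _ => false end.
Definition step (u : instr) (isnil : bool) (e j : thread) : thread :=
 match u with
 | Plain f meth => if isnil then pre (Act f meth) TD else pre (Act f meth) e
 | PTest f meth => if isnil then pre (Act f meth) TD else Pc e (Act f meth) j
 | NTest f meth => if isnil then pre (Act f meth) TD else Pc j (Act f meth) e
 | Jump _ => TD | Term => TS end.

Lemma ext_step u X : is_jt u = false -> ext (u::X) = step u (nilb X) (ext X) (jmpg 2 X).
Proof. intros H; destruct u; try discriminate; destruct X; reflexivity. Qed.

Section Map.
Variable g : instr -> instr.
Variable h : thread -> thread.
Hypothesis gJ : forall l, g (Jump l) = Jump l.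
Hypothesis gT : g Term = Term.
Hypothesis hD : h TD = TD.
Hypothesis hS : h TS = TS.
Hypothesis gstep : forall u, is_jt u = false -> is_jt (g u) = false /\
   forall b e j, step (g u) b (h e) (h j) = h (step u b e j).

Lemma jmpg_map : forall Y, (forall Z, length Z <= length Y -> ext (map g Z) = h (ext Z)) ->
  forall l, jmpg l (map g Y) = h (jmpg l Y).
Proof.
  induction Y as [|v Y IH]; intros H l; cbn [map].
  - rewrite !jmpg_nil; auto.
  - destruct l as [|[|l]].
    + rewrite !jmpg_0; auto.
    + rewrite !jmpg_1. apply (H (v::Y)); auto.
    + rewrite !jmpg_SS. apply IH. intros Z HZ; apply H; simpl; lia.
Qed.

Lemma ext_map_k : forall k X, length X <= k -> ext (map g X) = h (ext X).
Proof.
  induction k as [|k IHk]; intros X HX.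
  - destruct X; [simpl; auto | simpl in HX; lia].
  - destruct X as [|u X']; [simpl; auto|].
    assert (IH : forall Z, length Z <= length X' -> ext (map g Z) = h (ext Z))
      by (intros Z HZ; apply IHk; simpl in HX; lia).
    cbn [map].
    destruct (is_jt u) eqn:Hu.
    + destruct u; try discriminate.
      * rewrite gJ, !ext_jump. apply jmpg_map; auto.
      * rewrite gT, !ext_term; auto.
    + destruct (gstep u Hu) as [Hg Hs].
      rewrite !ext_step by auto.
      replace (nilb (map g X')) with (nilb X') by (destruct X'; reflexivity).
      rewrite IH by auto. rewrite jmpg_map by auto. apply Hs.
Qed.

Lemma ext_map : forall X, ext (map g X) = h (ext X).
Proof. intros X; apply (ext_map_k (length X)); auto. Qed.
End Map.

Fixpoint tall (P : focus -> method -> Prop) (x : thread) : Prop :=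
 match x with TS | TD => True
 | Pc x a y => (match a with Act f meth => P f meth | Trace _ _ _ => True end) /\ tall P x /\ tall P y end.

Definition iP (P : focus -> method -> Prop) (u : instr) : Prop :=
  match u with Plain f meth | PTest f meth | NTest f meth => P f meth | _ => True end.

Lemma jmpg_tall P : forall Y, (forall Z, length Z <= length Y -> Forall (iP P) Z -> tall P (ext Z)) ->
  Forall (iP P) Y -> forall l, tall P (jmpg l Y).
Proof.
  induction Y as [|v Y IH]; intros H HF l.
  - rewrite jmpg_nil; simpl; auto.
  - destruct l as [|[|l]].
    + rewrite jmpg_0; simpl; auto.
    + rewrite jmpg_1. apply H; auto.
    + rewrite jmpg_SS. inversion HF; subst. apply IH; auto.
      intros Z HZ; apply H; simpl; lia.
Qed.

Lemma ext_tall_k P : forall k X, length X <= k -> Forall (iP P) X -> tall P (ext X).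
Proof.
  induction k as [|k IHk]; intros X HX HF.
  - destruct X; [simpl; auto | simpl in HX; lia].
  - destruct X as [|u X']; [simpl; auto|].
    assert (IH : forall Z, length Z <= length X' -> Forall (iP P) Z -> tall P (ext Z))
      by (intros Z HZ; apply IHk; simpl in HX; lia).
    inversion HF as [|? ? Hu HX']; subst.
    assert (Hj := jmpg_tall P X' IH HX').
    assert (He : tall P (ext X')) by (apply IH; auto).
    destruct u; simpl in Hu.
    + rewrite ext_step by reflexivity. destruct X'; cbn [step nilb pre tall]; auto.
    + rewrite ext_step by reflexivity. destruct X'; cbn [step nilb pre tall]; auto.
    + rewrite ext_step by reflexivity. destruct X'; cbn [step nilb pre tall]; auto.
    + rewrite ext_jump; auto.
    + rewrite ext_term; simpl; auto.
Qed.

Lemma ext_tall P X : Forall (iP P) X -> tall P (ext X).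
Proof. apply (ext_tall_k P (length X)); auto. Qed.

Definition merge (F O : regfam) : regfam :=
  fun g => match F g with Some b => Some b | None => O g end.
Definition restrictOut (G : regfam) : regfam :=
  fun g => match g with Out _ => G g | _ => None end.
Definition isOut (f : focus) : bool := match f with Out _ => true | _ => false end.

Lemma upd_neq F f c g : g <> f -> upd F f c g = F g.
Proof. intros H; unfold upd; destruct focus_eq_dec; congruence. Qed.
Lemma upd_eq F f c : upd F f c f = Some c.
Proof. unfold upd; destruct focus_eq_dec; congruence. Qed.
Lemma upd_comm F f g c d : f <> g -> upd (upd F f c) g d = upd (upd F g d) f c.
Proof. intros H; extensionality k; unfold upd; repeat destruct focus_eq_dec; congruence. Qed.

Lemma lemA : forall x F O, (forall i, F (Out i) = None) -> (forall g, isOut g = false -> O g = None) ->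
  apply (use x F) O = restrictOut (apply x (merge F O)) /\
  tuse (tuse x F) O = tuse x (merge F O).
Proof.
  induction x as [| |x IHx a y IHy]; intros F O HF HO.
  - split; [|reflexivity]. simpl. extensionality g. unfold restrictOut, merge.
    destruct g; simpl; [apply HO; reflexivity|apply HO; reflexivity|rewrite HF; auto].
  - split; [|reflexivity]. simpl. extensionality g; destruct g; reflexivity.
  - destruct a as [f meth|f meth rr].
    + assert (Mf : merge F O f = match F f with Some b => Some b | None => O f end) by reflexivity.
      cbn [use apply tuse]. rewrite Mf.
      destruct (F f) as [c|] eqn:Ff.
      * destruct (proc meth c) as [r c'] eqn:Hp.
        assert (HF' : forall i, upd F f c' (Out i) = None).
        { intros i; unfold upd; destruct focus_eq_dec; [subst; congruence|auto]. }
        assert (HM : merge (upd F f c') O = upd (merge F O) f c').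
        { extensionality k; unfold merge, upd; destruct focus_eq_dec; auto. }
        destruct r.
        -- destruct (IHx (upd F f c') O HF' HO) as [A B]. rewrite A, HM.
           cbn [tuse pre]. rewrite B, HM. auto.
        -- destruct (IHy (upd F f c') O HF' HO) as [A B]. rewrite A, HM.
           cbn [tuse pre]. rewrite B, HM. auto.
      * cbn [apply tuse].
        destruct (O f) as [c|] eqn:Of.
        -- destruct (proc meth c) as [r c'] eqn:Hp.
           assert (HO' : forall g, isOut g = false -> upd O f c' g = None).
           { intros g Hg; unfold upd; destruct focus_eq_dec; [subst; rewrite HO in Of; congruence|auto]. }
           assert (HM : merge F (upd O f c') = upd (merge F O) f c').
           { extensionality k; unfold merge, upd; destruct focus_eq_dec; subst; auto. rewrite Ff; auto. }
           destruct r.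
           ++ destruct (IHx F (upd O f c') HF HO') as [A B]. rewrite A, HM, B, HM. auto.
           ++ destruct (IHy F (upd O f c') HF HO') as [A B]. rewrite A, HM, B, HM. auto.
        -- split. extensionality k; destruct k; reflexivity.
           destruct (IHx F O HF HO) as [_ B1]. destruct (IHy F O HF HO) as [_ B2].
           rewrite B1, B2. reflexivity.
    + cbn [use apply tuse pre]. destruct (IHx F O HF HO) as [A B]. rewrite A, B; auto.
Qed.

Lemma teq_sem n m : forall x y, teq n m x y -> forall G,
  apply x G = apply y G /\ depth (tuse x G) = depth (tuse y G).
Proof.
  intros x y H; induction H; intros G.
  - destruct a as [fa ma|]; [|contradiction]; destruct b as [fb mb|]; [|contradiction].
    simpl in H1.
    cbn [apply tuse].
    destruct (G fa) as [ca|] eqn:Ea; destruct (G fb) as [cb|] eqn:Eb.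
    + destruct (proc ma ca) as [ra ca'] eqn:Pa; destruct (proc mb cb) as [rb cb'] eqn:Pb.
      destruct ra, rb; cbn [apply tuse pre depth];
        rewrite ?upd_neq by congruence; rewrite ?Ea, ?Eb, ?Pa, ?Pb;
        rewrite (upd_comm G fa fb) by congruence; split; try reflexivity; cbn [depth]; lia.
    + destruct (proc ma ca) as [ra ca'] eqn:Pa.
      destruct ra; cbn [apply tuse pre depth];
        rewrite ?upd_neq by congruence; rewrite ?Ea, ?Eb, ?Pa; split; try reflexivity; cbn [depth]; lia.
    + destruct (proc mb cb) as [rb cb'] eqn:Pb.
      destruct rb; cbn [apply tuse pre depth];
        rewrite ?upd_neq by congruence; rewrite ?Ea, ?Eb, ?Pb; split; try reflexivity; cbn [depth]; lia.
    + cbn [depth]. split; [reflexivity|lia].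
  - auto.
  - destruct (IHteq1 G), (IHteq2 G); split; congruence.
  - destruct a as [f meth|]; [|contradiction].
    cbn [apply tuse]. destruct (G f) as [c|].
    + destruct (proc meth c) as [r c']. destruct r; cbn [pre depth]; [destruct (IHteq1 (upd G f c'))|destruct (IHteq2 (upd G f c'))]; split; congruence.
    + split; [reflexivity|]. cbn [depth]. rewrite (proj2 (IHteq1 G)), (proj2 (IHteq2 G)). auto.
Qed.

Fixpoint tchi (I : list nat) (x : thread) : thread :=
  match x with
  | TS => TS | TD => TD
  | Pc x a y =>
    match a with
    | Act (Aux i) meth =>
      if in_dec Nat.eq_dec i I then Pc (tchi I y) (Act (Aux i) (swap_set meth)) (tchi I x)
      else Pc (tchi I x) a (tchi I y)
    | _ => Pc (tchi I x) a (tchi I y)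
    end
  end.

Lemma ext_chi I X : ext (chi I X) = tchi I (ext X).
Proof.
  unfold chi. apply ext_map; auto.
  intros u Hu. destruct u; try discriminate; split;
  try (destruct f; simpl; try destruct in_dec; reflexivity);
  intros b e j; destruct f; destruct b; unfold step, pre; simpl; try destruct in_dec; reflexivity.
Qed.

Fixpoint trho (r : nat -> nat) (x : thread) : thread :=
  match x with
  | TS => TS | TD => TD
  | Pc x (Act f meth) y => Pc (trho r x) (Act (rho_focus r f) meth) (trho r y)
  | Pc x a y => Pc (trho r x) a (trho r y)
  end.

Lemma ext_rho r X : ext (rho r X) = trho r (ext X).
Proof.
  unfold rho. apply ext_map; auto.
  intros u Hu. destruct u; try discriminate; split; try reflexivity;
  intros [] e j; reflexivity.
Qed.

Definition flip (I : list nat) (F : regfam) : regfam :=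
  fun g => match g with
  | Aux i => if in_dec Nat.eq_dec i I then option_map negb (F g) else F g
  | _ => F g end.

Lemma inv_upd_in I G G' i c : (forall g, G' g = flip I G g) -> In i I ->
  forall g, upd G' (Aux i) (negb c) g = flip I (upd G (Aux i) c) g.
Proof.
  intros H Hi g. destruct (focus_eq_dec g (Aux i)) as [e|ne].
  - subst. rewrite upd_eq. unfold flip. destruct in_dec; [|contradiction]. rewrite upd_eq; reflexivity.
  - rewrite upd_neq by auto. rewrite H. unfold flip. destruct g; rewrite upd_neq by auto; reflexivity.
Qed.

Lemma inv_upd_out I G G' f c : (forall g, G' g = flip I G g) -> (forall i, f = Aux i -> ~ In i I) ->
  forall g, upd G' f c g = flip I (upd G f c) g.
Proof.
  intros H Hi g. destruct (focus_eq_dec g f) as [e|ne].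
  - subst. rewrite upd_eq. unfold flip. destruct f; rewrite ?upd_eq; auto.
    destruct in_dec as [Hin|]; [exfalso; eapply Hi; eauto|]; auto.
  - rewrite upd_neq by auto. rewrite H. unfold flip. destruct g; rewrite upd_neq by auto; reflexivity.
Qed.

Lemma flip_empty I g : flip I empty_fam g = empty_fam g.
Proof. destruct g; simpl; try reflexivity; destruct in_dec; reflexivity. Qed.

Lemma chi_sem I : forall x G G', (forall g, G' g = flip I G g) ->
  (forall g, apply (tchi I x) G' g = flip I (apply x G) g) /\
  depth (tuse (tchi I x) G') = depth (tuse x G).
Proof.
  induction x as [| |x IHx a y IHy]; intros G G' H.
  - simpl; auto.
  - simpl; split; auto. intros g; symmetry; apply flip_empty.
  - destruct a as [f meth|f meth rr].
    + assert (Hgen : (forall i, f = Aux i -> ~ In i I) ->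
        (forall g, apply (Pc (tchi I x) (Act f meth) (tchi I y)) G' g =
                   flip I (apply (Pc x (Act f meth) y) G) g) /\
        depth (tuse (Pc (tchi I x) (Act f meth) (tchi I y)) G') =
        depth (tuse (Pc x (Act f meth) y) G)).
      { intros Hn.
        assert (Ef : G' f = G f).
        { rewrite H. unfold flip. destruct f; auto. destruct in_dec; auto. exfalso; eapply Hn; eauto. }
        cbn [apply tuse]. rewrite Ef. destruct (G f) as [c|].
        - destruct (proc meth c) as [r c']. 
          assert (Hi := inv_upd_out I G G' f c' H Hn).
          destruct r; cbn [pre depth].
          + destruct (IHx _ _ Hi); split; auto; congruence.
          + destruct (IHy _ _ Hi); split; auto; congruence.
        - split; [intros; symmetry; apply flip_empty|].
          cbn [depth]. rewrite (proj2 (IHx G G' H)), (proj2 (IHy G G' H)); auto. }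
      destruct f as [i|i|i]; try (apply Hgen; congruence).
      cbn [tchi]. destruct (in_dec Nat.eq_dec i I) as [Hin|Hnin]; [|apply Hgen; congruence].
      assert (Ef : G' (Aux i) = option_map negb (G (Aux i))).
      { rewrite H. simpl. destruct in_dec; [auto|contradiction]. }
      cbn [apply tuse]. rewrite Ef. destruct (G (Aux i)) as [c|].
      * cbn [option_map].
        destruct meth as [d|]; cbn [proc swap_set].
        -- destruct d; cbn [negb pre depth].
           ++ assert (Hi := inv_upd_in I G G' i true H Hin). destruct (IHx _ _ Hi); split; auto; congruence.
           ++ assert (Hi := inv_upd_in I G G' i false H Hin). destruct (IHy _ _ Hi); split; auto; congruence.
        -- destruct c; cbn [negb pre depth].
           ++ assert (Hi := inv_upd_in I G G' i true H Hin). destruct (IHx _ _ Hi); split; auto; congruence.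
           ++ assert (Hi := inv_upd_in I G G' i false H Hin). destruct (IHy _ _ Hi); split; auto; congruence.
      * cbn [option_map]. split; [intros; symmetry; apply flip_empty|].
        cbn [depth]. rewrite (proj2 (IHx G G' H)), (proj2 (IHy G G' H)); lia.
    + cbn [tchi apply tuse pre depth]. destruct (IHx G G' H); split; auto; congruence.
Qed.

Lemma rho_sem r (R : focus -> Prop)
  (Hinj : forall f g, R f -> R g -> rho_focus r f = rho_focus r g -> f = g) :
  forall x G G', tall (fun f _ => R f) x -> (forall f, R f -> G' (rho_focus r f) = G f) ->
  (forall f, R f -> apply (trho r x) G' (rho_focus r f) = apply x G f) /\
  depth (tuse (trho r x) G') = depth (tuse x G).
Proof.
  induction x as [| |x IHx a y IHy]; intros G G' Ht Hinv.
  - simpl; auto.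
  - simpl; auto.
  - destruct a as [f meth|f meth rr]; cbn [tall] in Ht; destruct Ht as [Hf [Hx Hy]].
    + cbn [trho apply tuse]. rewrite (Hinv f Hf). destruct (G f) as [c|].
      * destruct (proc meth c) as [r0 c'].
        assert (Hinv' : forall g, R g -> upd G' (rho_focus r f) c' (rho_focus r g) = upd G f c' g).
        { intros g Hg. unfold upd.
          destruct (focus_eq_dec (rho_focus r g) (rho_focus r f)) as [e|ne];
          destruct (focus_eq_dec g f) as [e'|ne']; auto.
          - exfalso. apply ne'. apply Hinj; auto.
          - subst. contradiction. }
        destruct r0; cbn [pre depth].
        -- destruct (IHx _ _ Hx Hinv'); split; auto; congruence.
        -- destruct (IHy _ _ Hy Hinv'); split; auto; congruence.
      * split; [intros; reflexivity|]. cbn [depth].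
        rewrite (proj2 (IHx G G' Hx Hinv)), (proj2 (IHy G G' Hy Hinv)); auto.
    + cbn [trho apply tuse pre depth]. destruct (IHx G G' Hx Hinv); split; auto; congruence.
Qed.

Definition GG n m l b c := merge (fam_IA n l b c) (fam_O m).

Definition SemEq n m X Y := exists L, forall l, L <= l -> forall b', exists b'', forall b,
  restrictOut (apply (ext X) (GG n m l b b')) = restrictOut (apply (ext Y) (GG n m l b b''))
  /\ depth (tuse (ext X) (GG n m l b b')) = depth (tuse (ext Y) (GG n m l b b'')).

Definition iaux (u : instr) : nat :=
  match u with Plain f _ | PTest f _ | NTest f _ => match f with Aux i => i | _ => 0 end | _ => 0 end.
Fixpoint maxaux (X : list instr) : nat := match X with [] => 0 | u :: X' => Nat.max (iaux u) (maxaux X') end.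
Lemma maxaux_bound X : Forall (fun u => iaux u <= maxaux X) X.
Proof.
  induction X; constructor; simpl; [lia|]. idtac.
  refine (Forall_impl _ _ IHX). intros; lia.
Qed.

Definition Pb (L : nat) : focus -> method -> Prop :=
  fun f _ => match f with Aux i => 1 <= i <= L | _ => True end.

Lemma IS_tall n m X : IS n m X -> tall (Pb (maxaux X)) (ext X).
Proof.
  intros [_ HF]. apply ext_tall. apply Forall_forall. intros u Hu.
  rewrite Forall_forall in HF. specialize (HF u Hu).
  assert (Hb := proj1 (Forall_forall _ _) (maxaux_bound X) u Hu).
  destruct u; simpl in *; auto; destruct f; simpl in *; auto; lia.
Qed.

Lemma tall_combine r P P' : forall x, tall P x -> tall P' (trho r x) ->
  tall (fun f meth => P f meth /\ P' (rho_focus r f) meth) x.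
Proof.
  induction x as [| |x IHx a y IHy]; simpl; auto.
  destruct a; simpl; intuition.
Qed.

Lemma tall_impl (P Q : focus -> method -> Prop) : (forall f meth, P f meth -> Q f meth) ->
  forall x, tall P x -> tall Q x.
Proof.
  intros H; induction x as [| |x IHx a y IHy]; simpl; auto.
  destruct a; intuition.
Qed.

Fixpoint invf (r : nat -> nat) (j k : nat) : nat :=
  match k with 0 => 0 | S k' => if Nat.eqb (r (S k')) j then S k' else invf r j k' end.

Lemma invf_spec r (Hinj : forall i j, 0 < i -> 0 < j -> r i = r j -> i = j) i :
  1 <= i -> forall k, i <= k -> invf r (r i) k = i.
Proof.
  intros Hi; induction k; intros Hk; [lia|]. simpl.
  destruct (Nat.eqb_spec (r (S k)) (r i)) as [e|ne].
  - apply Hinj; auto; lia.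
  - assert (i <> S k) by congruence. apply IHk; lia.
Qed.

Definition Rr (l : nat) (r : nat -> nat) (f : focus) : Prop :=
  match f with Aux i => 1 <= i <= l /\ 1 <= r i <= l | _ => True end.

Lemma main n m X Y : sa_equiv n m X Y -> SemEq n m X Y.
Proof.
  intros H; induction H.
  - exists 0. intros l _ b'. exists b'. intros b. rewrite H1. auto.
  - subst Y. exists 0. intros l _ b'.
    exists (fun i => if in_dec Nat.eq_dec i I then negb (b' i) else b' i). intros b.
    rewrite ext_chi.
    assert (Hf : forall g, GG n m l b (fun i => if in_dec Nat.eq_dec i I then negb (b' i) else b' i) g
                           = flip I (GG n m l b b') g).
    { intros g; destruct g; unfold GG, merge, fam_IA, fam_O, flip; try reflexivity.
      destruct ((1 <=? i) && (i <=? l)); destruct in_dec; reflexivity. }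
    destruct (chi_sem I (ext X) _ _ Hf) as [A B]. split; [|auto].
    extensionality g. unfold restrictOut. destruct g; auto; rewrite A; reflexivity.
  - subst Y. exists (Nat.max (maxaux X) (maxaux (rho r X))). intros l Hl b'.
    exists (fun j => b' (invf r j l)). intros b.
    destruct H1 as [Hpos [Hinj Hsur]].
    assert (Ht1 := IS_tall n m X H).
    assert (Ht2 := IS_tall n m (rho r X) H0). rewrite ext_rho in Ht2.
    assert (Ht : tall (fun f _ => Rr l r f) (ext X)).
    { eapply tall_impl; [|exact (tall_combine r _ _ _ Ht1 Ht2)].
      intros f meth [P1 P2]; destruct f; simpl in *; auto; lia. }
    assert (HinjR : forall f g, Rr l r f -> Rr l r g -> rho_focus r f = rho_focus r g -> f = g).
    { intros f g Hf Hg Heq; destruct f, g; simpl in *; try discriminate; auto.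
      inversion Heq. f_equal. apply Hinj; auto; lia. }
    assert (Hinv : forall f, Rr l r f -> GG n m l b (fun j => b' (invf r j l)) (rho_focus r f) = GG n m l b b' f).
    { intros f Hf; destruct f; simpl; try reflexivity.
      unfold GG, merge, fam_IA. simpl in Hf.
      replace ((1 <=? r i) && (r i <=? l)) with true
        by (symmetry; apply andb_true_intro; split; apply Nat.leb_le; lia).
      replace ((1 <=? i) && (i <=? l)) with true
        by (symmetry; apply andb_true_intro; split; apply Nat.leb_le; lia).
      rewrite invf_spec; auto; lia. }
    destruct (rho_sem r (Rr l r) HinjR (ext X) _ _ Ht Hinv) as [A B].
    rewrite ext_rho. split; [|auto].
    extensionality g. unfold restrictOut. destruct g; auto.
    symmetry. apply (A (Out i)). exact I.
  - exists 0. intros l _ b'. exists b'. intros b.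
    destruct (teq_sem n m _ _ H1 (GG n m l b b')) as [A B]. rewrite A, B. auto.
  - destruct IHsa_equiv1 as [L1 H1], IHsa_equiv2 as [L2 H2].
    exists (Nat.max L1 L2). intros l Hl b'.
    destruct (H1 l ltac:(lia) b') as [b1 Hb1].
    destruct (H2 l ltac:(lia) b1) as [b2 Hb2].
    exists b2. intros b. destruct (Hb1 b), (Hb2 b). split; congruence.
Qed.

Theorem theorem1 :
  forall (n m : nat) (X Y : list instr),
    IS n m X -> IS n m Y ->
    sa_equiv n m X Y ->
    exists l : nat,
      forall b' : nat -> bool, exists b'' : nat -> bool,
        forall b : nat -> bool,
          apply (use (ext X) (fam_IA n l b b')) (fam_O m)
            = apply (use (ext Y) (fam_IA n l b b'')) (fam_O m)
          /\ depth (tuse (tuse (ext X) (fam_IA n l b b')) (fam_O m))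
             = depth (tuse (tuse (ext Y) (fam_IA n l b b'')) (fam_O m)).
Proof.
  intros n m X Y HX HY H.
  destruct (main n m X Y H) as [L HL]. exists L. intros b'.
  destruct (HL L (le_n L) b') as [b'' Hb'']. exists b''. intros b.
  destruct (Hb'' b) as [E1 E2].
  assert (HF : forall c i, fam_IA n L b c (Out i) = None) by reflexivity.
  assert (HO : forall g, isOut g = false -> fam_O m g = None) by (intros g; destruct g; simpl; congruence).
  destruct (lemA (ext X) _ _ (HF b') HO) as [A1 B1].
  destruct (lemA (ext Y) _ _ (HF b'') HO) as [A2 B2].
  rewrite A1, A2, B1, B2. unfold GG in *. auto.
Qed.
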